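(* Let $0<q<1$. The kernel $K(\mu,n)=1/(q^{\mu};q)_n$ is strictly sign regular of order $3$ on $(0,\infty)\times\mathbb{N}_0$ with sign pattern $(+,-,-)$, i.e. for all reals $0<\mu_1<\mu_2<\mu_3$ and integers $0\le n_1<n_2<n_3$: $K(\mu_1,n_1)>0$, $\det\big(K(\mu_i,n_j)\big)_{i,j=1}^2<0$, and $\det\big(K(\mu_i,n_j)\big)_{i,j=1}^3<0$ (for all choices of indices of the respective sizes).
   Context: $(a;q)_n=\prod_{j=0}^{n-1}(1-aq^j)$, with $(a;q)_0=1$. *)

(* Defs.v *)
From Stdlib Require Import Reals.
Open Scope R_scope.

Fixpoint qpoch (a q : R) (n : nat) : R :=
  match n with
  | O => 1
  | S m => qpoch a q m * (1 - a * q ^ m)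
  end.

Definition Kq (q mu : R) (n : nat) : R := / qpoch (Rpower q mu) q n.

Definition det2 (a11 a12 a21 a22 : R) : R := a11 * a22 - a12 * a21.

Definition det3 (a11 a12 a13 a21 a22 a23 a31 a32 a33 : R) : R :=
  a11 * (a22 * a33 - a23 * a32)
  - a12 * (a21 * a33 - a23 * a31)
  + a13 * (a21 * a32 - a22 * a31).

(* Main.v *)
Require Import Defs.
From Stdlib Require Import Reals Lra Lia Psatz.
Open Scope R_scope.

Fixpoint Pr (x q : R) (m k : nat) : R :=
  match k with O => 1 | S k => Pr x q m k * (1 - x * q ^ (m + k)) end.
Fixpoint Wq (x q : R) (m k : nat) : R :=
  match k with O => 0 | S k => Wq x q m k + q ^ (m + k) / (1 - x * q ^ (m + k)) end.

Lemma qpoch_add x q m k : qpoch x q (m + k) = qpoch x q m * Pr x q m k.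
Proof.
  induction k as [|k IH]; simpl.
  - rewrite Nat.add_0_r; ring.
  - rewrite Nat.add_succ_r; simpl; rewrite IH; ring.
Qed.

Lemma powq q j : 0 < q < 1 -> 0 < q ^ j <= 1.
Proof.
  intros Hq; induction j as [|j IH]; simpl; [lra|]. split; nra.
Qed.

Lemma term_pos x q j : 0 < q < 1 -> 0 < x < 1 -> 0 < 1 - x * q ^ j.
Proof. intros Hq Hx; pose proof (powq q j Hq); nra. Qed.

Lemma Pr_pos x q m k : 0 < q < 1 -> 0 < x < 1 -> 0 < Pr x q m k.
Proof.
  intros Hq Hx; induction k as [|k IH]; simpl; [lra|].
  pose proof (term_pos x q (m+k) Hq Hx); nra.
Qed.

Lemma W_nonneg x q m k : 0 < q < 1 -> 0 < x < 1 -> 0 <= Wq x q m k.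
Proof.
  intros Hq Hx; induction k as [|k IH]; simpl; [lra|].
  pose proof (term_pos x q (m+k) Hq Hx); pose proof (powq q (m+k) Hq).
  assert (0 < q ^ (m + k) / (1 - x * q ^ (m + k))) by (apply Rdiv_lt_0_compat; lra).
  lra.
Qed.

Lemma W_pos x q m k : 0 < q < 1 -> 0 < x < 1 -> (0 < k)%nat -> 0 < Wq x q m k.
Proof.
  intros Hq Hx Hk; destruct k as [|k]; [lia|]; simpl.
  pose proof (W_nonneg x q m k Hq Hx).
  pose proof (term_pos x q (m+k) Hq Hx); pose proof (powq q (m+k) Hq).
  assert (0 < q ^ (m + k) / (1 - x * q ^ (m + k))) by (apply Rdiv_lt_0_compat; lra).
  lra.
Qed.

Lemma W_mono x y q m k : 0 < q < 1 -> 0 < x -> x < y -> y < 1 -> (0 < k)%nat ->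
  Wq x q m k < Wq y q m k.
Proof.
  intros Hq Hx Hxy Hy Hk.
  assert (Hle : forall k, Wq x q m k <= Wq y q m k /\
     ((0 < k)%nat -> Wq x q m k < Wq y q m k)).
  { clear Hk; clear k; intro k; induction k as [|k IH]; simpl; [split; [lra|lia]|].
    pose proof (term_pos x q (m+k) Hq (conj Hx (Rlt_trans _ _ _ Hxy Hy))).
    pose proof (term_pos y q (m+k) Hq (conj (Rlt_trans _ _ _ Hx Hxy) Hy)).
    pose proof (powq q (m+k) Hq).
    assert (q ^ (m + k) / (1 - x * q ^ (m + k)) < q ^ (m + k) / (1 - y * q ^ (m + k))).
    { unfold Rdiv; apply Rmult_lt_compat_l; [lra|]. apply Rinv_lt_contravar; nra. }
    destruct IH; split; [lra| intros; lra]. }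
  apply Hle; exact Hk.
Qed.

Lemma L1 x y q m k : 0 < q < 1 -> 0 < x -> x < y -> y < 1 ->
  Pr y q m k * (1 + (y - x) * Wq y q m k) <= Pr x q m k.
Proof.
  intros Hq Hx Hxy Hy; induction k as [|k IH]; simpl; [lra|].
  set (c := q ^ (m + k)) in *.
  pose proof (powq q (m+k) Hq); fold c in H.
  pose proof (Pr_pos y q m k Hq (conj (Rlt_trans _ _ _ Hx Hxy) Hy)).
  pose proof (W_nonneg y q m k Hq (conj (Rlt_trans _ _ _ Hx Hxy) Hy)).
  assert (HH1 : 0 < 1 - y * c) by nra.
  set (t := c / (1 - y * c)).
  assert (Ht : t * (1 - y * c) = c) by (unfold t; field; lra).
  set (P := Pr x q m k) in *; set (Q := Pr y q m k) in *; set (W := Wq y q m k) in *.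
  assert (E : Q * (1 - y * c) * (1 + (y - x) * (W + t)) =
          Q * (1 - y * c) * (1 + (y - x) * W) + Q * (y - x) * c) by (unfold t; field; lra).
  rewrite E.
  assert (P * (1 - x * c) >= Q * (1 + (y - x) * W) * (1 - x*c)).
  { apply Rle_ge, Rmult_le_compat_r; nra. }
  assert (0 <= Q * W * (y - x) * c).
  { apply Rmult_le_pos; [|lra]. apply Rmult_le_pos; [|lra]. nra. }
  nra.
Qed.

Lemma L2 x y q m k : 0 < q < 1 -> 0 < x -> x < y -> y < 1 ->
  Pr x q m k * (1 - (y - x) * Wq x q m k) <= Pr y q m k.
Proof.
  intros Hq Hx Hxy Hy; induction k as [|k IH]; simpl; [lra|].
  set (c := q ^ (m + k)) in *.
  pose proof (powq q (m+k) Hq); fold c in H.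
  pose proof (Pr_pos x q m k Hq (conj Hx (Rlt_trans _ _ _ Hxy Hy))).
  pose proof (W_nonneg x q m k Hq (conj Hx (Rlt_trans _ _ _ Hxy Hy))).
  assert (HH1 : 0 < 1 - x * c) by nra.
  assert (HH2 : 0 <= 1 - y * c) by nra.
  set (t := c / (1 - x * c)).
  assert (Ht : t * (1 - x * c) = c) by (unfold t; field; lra).
  set (P := Pr x q m k) in *; set (Q := Pr y q m k) in *; set (W := Wq x q m k) in *.
  assert (E : P * (1 - x * c) * (1 - (y - x) * (W + t)) =
          P * (1 - x * c) * (1 - (y - x) * W) - P * (y - x) * c) by (unfold t; field; lra).
  rewrite E.
  assert (Q * (1 - y * c) >= P * (1 - (y - x) * W) * (1 - y*c)).
  { apply Rle_ge, Rmult_le_compat_r; nra. }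
  assert (0 <= P * W * (y - x) * c).
  { apply Rmult_le_pos; [|lra]. apply Rmult_le_pos; [|lra]. nra. }
  nra.
Qed.

Lemma CA_lem A2 A3 B2 B3 al be be' d :
  0 < A2 -> 0 < B3 -> 0 < al -> 0 < d -> 0 <= be' -> be' < be ->
  A2 * (1 + d * al) <= A3 -> B3 * (1 - d * be') <= B2 ->
  al * A2 * (B3 - B2) < be * B3 * (A3 - A2).
Proof.
  intros. 
  assert (E1 : al * A2 * (B3 - B2) <= al * A2 * (B3 * d * be')).
  { apply Rmult_le_compat_l; [apply Rmult_le_pos; lra| lra]. }
  assert (E2 : al * A2 * (B3 * d * be') < al * A2 * (B3 * d * be)).
  { apply Rmult_lt_compat_l; [apply Rmult_lt_0_compat; lra|].
    apply Rmult_lt_compat_l; [apply Rmult_lt_0_compat; lra| lra]. }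
  assert (E3 : be * B3 * (A2 * d * al) <= be * B3 * (A3 - A2)).
  { apply Rmult_le_compat_l; [apply Rmult_le_pos; lra| lra]. }
  assert (al * A2 * (B3 * d * be) = be * B3 * (A2 * d * al)) by ring.
  lra.
Qed.

Lemma CB_lem A1 A2 B1 B2 al be be'' d :
  0 < A2 -> 0 < B1 -> 0 < al -> 0 < d -> 0 <= be -> be < be'' ->
  B1 * (1 + d * be'') <= B2 -> A2 * (1 - d * al) <= A1 ->
  be * B1 * (A2 - A1) < al * A2 * (B2 - B1).
Proof.
  intros.
  assert (E1 : al * A2 * (B1 * d * be'') <= al * A2 * (B2 - B1)).
  { apply Rmult_le_compat_l; [apply Rmult_le_pos; lra| lra]. }
  assert (E2 : al * A2 * (B1 * d * be) < al * A2 * (B1 * d * be'')).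
  { apply Rmult_lt_compat_l; [apply Rmult_lt_0_compat; lra|].
    apply Rmult_lt_compat_l; [apply Rmult_lt_0_compat; lra| lra]. }
  assert (E3 : be * B1 * (A2 - A1) <= be * B1 * (A2 * d * al)).
  { apply Rmult_le_compat_l; [apply Rmult_le_pos; lra| lra]. }
  assert (al * A2 * (B1 * d * be) = be * B1 * (A2 * d * al)) by ring.
  lra.
Qed.

Lemma alg3 p1 p2 p3 A1 A2 A3 B1 B2 B3 al be :
  0 < p1 -> 0 < p2 -> 0 < p3 -> 0 < A1 -> 0 < A2 -> 0 < A3 ->
  0 < B1 -> 0 < B2 -> 0 < B3 -> 0 < al -> 0 < be ->
  A1 < A2 -> A2 < A3 ->
  al * A2 * (B3 - B2) < be * B3 * (A3 - A2) ->
  be * B1 * (A2 - A1) < al * A2 * (B2 - B1) ->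
  det3 (/p1) (/(p1*A1)) (/(p1*A1*B1))
       (/p2) (/(p2*A2)) (/(p2*A2*B2))
       (/p3) (/(p3*A3)) (/(p3*A3*B3)) < 0.
Proof.
  intros Hp1 Hp2 Hp3 HA1 HA2 HA3 HB1 HB2 HB3 Hal Hbe H12 H23 CA CB.
  set (g1 := / A1); set (g2 := / A2); set (g3 := / A3).
  set (h1 := / (A1 * B1)); set (h2 := / (A2 * B2)); set (h3 := / (A3 * B3)).
  set (rho := (al + be) / (al * B2)).
  assert (Edet : det3 (/p1) (/(p1*A1)) (/(p1*A1*B1))
       (/p2) (/(p2*A2)) (/(p2*A2*B2))
       (/p3) (/(p3*A3)) (/(p3*A3*B3)) =
       / (p1 * p2 * p3) * - ((g2 - g3) * (h1 - h2) - (g1 - g2) * (h2 - h3))).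
  { unfold det3, g1, g2, g3, h1, h2, h3; field; repeat split; lra. }
  rewrite Edet.
  assert (HA : h2 - h3 - rho * (g2 - g3) =
     (al * A2 * (B3 - B2) - be * B3 * (A3 - A2)) / (al * A2 * A3 * B2 * B3)).
  { unfold h2, h3, g2, g3, rho; field; repeat split; lra. }
  assert (HB : h1 - h2 - rho * (g1 - g2) =
     (al * A2 * (B2 - B1) - be * B1 * (A2 - A1)) / (al * A1 * A2 * B1 * B2)).
  { unfold h1, h2, g1, g2, rho; field; repeat split; lra. }
  assert (HA' : h2 - h3 - rho * (g2 - g3) < 0).
  { rewrite HA; apply Rdiv_neg_pos; [lra|].
    repeat apply Rmult_lt_0_compat; lra. }
  assert (HB' : 0 < h1 - h2 - rho * (g1 - g2)).
  { rewrite HB; apply Rdiv_lt_0_compat; [lra|].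
    repeat apply Rmult_lt_0_compat; lra. }
  assert (G1 : g2 < g1) by (apply Rinv_lt_contravar; nra).
  assert (G2 : g3 < g2) by (apply Rinv_lt_contravar; nra).
  assert (F1 : (g2 - g3) * (rho * (g1 - g2)) < (g2 - g3) * (h1 - h2)).
  { apply Rmult_lt_compat_l; lra. }
  assert (F2 : (g1 - g2) * (h2 - h3) < (g1 - g2) * (rho * (g2 - g3))).
  { apply Rmult_lt_compat_l; lra. }
  assert (0 < / (p1 * p2 * p3)) by (apply Rinv_0_lt_compat; repeat apply Rmult_lt_0_compat; lra).
  assert (0 < (g2 - g3) * (h1 - h2) - (g1 - g2) * (h2 - h3)) by nra.
  nra.
Qed.

Lemma lnq_neg q : 0 < q < 1 -> ln q < 0.
Proof. intros; rewrite <- ln_1; apply ln_increasing; lra. Qed.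

Lemma xfacts q mu : 0 < q < 1 -> 0 < mu -> 0 < Rpower q mu < 1.
Proof.
  intros Hq Hm; unfold Rpower; split; [apply exp_pos|].
  rewrite <- exp_0; apply exp_increasing. pose proof (lnq_neg q Hq); nra.
Qed.

Lemma xmono q mu1 mu2 : 0 < q < 1 -> mu1 < mu2 -> Rpower q mu2 < Rpower q mu1.
Proof.
  intros Hq Hm; unfold Rpower; apply exp_increasing. pose proof (lnq_neg q Hq); nra.
Qed.

Lemma qpoch_pos x q n : 0 < q < 1 -> 0 < x < 1 -> 0 < qpoch x q n.
Proof.
  intros Hq Hx; induction n; simpl; [lra|].
  pose proof (term_pos x q n Hq Hx); nra.
Qed.

Theorem lemma4 (q : R) (hq0 : 0 < q) (hq1 : q < 1) :
  (forall (mu1 : R) (n1 : nat), 0 < mu1 -> 0 < Kq q mu1 n1) /\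
  (forall (mu1 mu2 : R) (n1 n2 : nat),
      0 < mu1 -> mu1 < mu2 -> (n1 < n2)%nat ->
      det2 (Kq q mu1 n1) (Kq q mu1 n2)
           (Kq q mu2 n1) (Kq q mu2 n2) < 0) /\
  (forall (mu1 mu2 mu3 : R) (n1 n2 n3 : nat),
      0 < mu1 -> mu1 < mu2 -> mu2 < mu3 -> (n1 < n2)%nat -> (n2 < n3)%nat ->
      det3 (Kq q mu1 n1) (Kq q mu1 n2) (Kq q mu1 n3)
           (Kq q mu2 n1) (Kq q mu2 n2) (Kq q mu2 n3)
           (Kq q mu3 n1) (Kq q mu3 n2) (Kq q mu3 n3) < 0).
Proof.
  assert (Hq : 0 < q < 1) by lra.
  split; [|split].
  - intros mu n Hm; unfold Kq. apply Rinv_0_lt_compat, qpoch_pos; auto.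
    apply xfacts; auto.
  - intros mu1 mu2 n1 n2 Hm1 H12 Hn.
    unfold Kq.
    set (x1 := Rpower q mu1); set (x2 := Rpower q mu2).
    assert (X1 : 0 < x1 < 1) by (apply xfacts; auto).
    assert (X2 : 0 < x2 < 1) by (apply xfacts; auto; lra).
    assert (X12 : x2 < x1) by (apply xmono; auto).
    replace n2 with (n1 + (n2 - n1))%nat by lia.
    set (a := (n2 - n1)%nat). assert (Ha : (0 < a)%nat) by (unfold a; lia).
    rewrite !qpoch_add.
    pose proof (qpoch_pos x1 q n1 Hq X1); pose proof (qpoch_pos x2 q n1 Hq X2).
    pose proof (Pr_pos x1 q n1 a Hq X1); pose proof (Pr_pos x2 q n1 a Hq X2).
    pose proof (L1 x2 x1 q n1 a Hq (proj1 X2) X12 (proj2 X1)).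
    pose proof (W_pos x1 q n1 a Hq X1 Ha).
    set (p1 := qpoch x1 q n1) in *; set (p2 := qpoch x2 q n1) in *;
    set (A1 := Pr x1 q n1 a) in *; set (A2 := Pr x2 q n1 a) in *.
    assert (A1 < A2).
    { assert (0 < A1 * ((x1 - x2) * Wq x1 q n1 a)) by
        (apply Rmult_lt_0_compat; [lra| apply Rmult_lt_0_compat; lra]). nra. }
    unfold det2.
    assert (E : / p1 * / (p2 * A2) - / (p1 * A1) * / p2 = (A1 - A2) / (p1 * p2 * A1 * A2))
      by (field; repeat split; lra).
    rewrite E; apply Rdiv_neg_pos; [lra|]. repeat apply Rmult_lt_0_compat; lra.
  - intros mu1 mu2 mu3 n1 n2 n3 Hm1 H12 H23 Hn12 Hn23.
    unfold Kq.
    set (x1 := Rpower q mu1); set (x2 := Rpower q mu2); set (x3 := Rpower q mu3).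
    assert (X1 : 0 < x1 < 1) by (apply xfacts; auto).
    assert (X2 : 0 < x2 < 1) by (apply xfacts; auto; lra).
    assert (X3 : 0 < x3 < 1) by (apply xfacts; auto; lra).
    assert (X12 : x2 < x1) by (apply xmono; auto).
    assert (X23 : x3 < x2) by (apply xmono; auto).
    destruct (Nat.le_exists_sub (S n1) n2 Hn12) as [a' [Ea _]].
    destruct (Nat.le_exists_sub (S n2) n3 Hn23) as [b' [Eb _]].
    set (a := S a'). set (b := S b').
    assert (Ha : (0 < a)%nat) by (unfold a; lia).
    assert (Hb : (0 < b)%nat) by (unfold b; lia).
    assert (En3 : n3 = (n1 + a + b)%nat) by (unfold a, b; lia).
    assert (En2 : n2 = (n1 + a)%nat) by (unfold a; lia).
    rewrite En3, En2. clearbody a b.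
    rewrite !qpoch_add.
    apply (alg3 _ _ _ _ _ _ _ _ _ (Wq x2 q n1 a) (Wq x2 q (n1+a) b)).
    all: try (apply qpoch_pos; auto).
    all: try (apply Pr_pos; auto).
    + apply W_pos; auto.
    + apply W_pos; auto.
    + pose proof (L1 x2 x1 q n1 a Hq (proj1 X2) X12 (proj2 X1)).
      pose proof (W_pos x1 q n1 a Hq X1 Ha).
      pose proof (Pr_pos x1 q n1 a Hq X1).
      assert (0 < Pr x1 q n1 a * ((x1 - x2) * Wq x1 q n1 a)) by
        (apply Rmult_lt_0_compat; [lra| apply Rmult_lt_0_compat; lra]). nra.
    + pose proof (L1 x3 x2 q n1 a Hq (proj1 X3) X23 (proj2 X2)).
      pose proof (W_pos x2 q n1 a Hq X2 Ha).
      pose proof (Pr_pos x2 q n1 a Hq X2).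
      assert (0 < Pr x2 q n1 a * ((x2 - x3) * Wq x2 q n1 a)) by
        (apply Rmult_lt_0_compat; [lra| apply Rmult_lt_0_compat; lra]). nra.
    + apply (CA_lem _ _ _ _ _ _ (Wq x3 q (n1 + a) b) (x2 - x3)).
      * apply Pr_pos; auto.
      * apply Pr_pos; auto.
      * apply W_pos; auto.
      * lra.
      * apply W_nonneg; auto.
      * apply W_mono; auto; lra.
      * apply L1; auto; lra.
      * apply L2; auto; lra.
    + apply (CB_lem _ _ _ _ _ _ (Wq x1 q (n1 + a) b) (x1 - x2)).
      * apply Pr_pos; auto.
      * apply Pr_pos; auto.
      * apply W_pos; auto.
      * lra.
      * apply W_nonneg; auto.
      * apply W_mono; auto; lra.
      * apply L1; auto; lra.
      * apply L2; auto; lra.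
Qed.
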